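(* Let $M\ge 2$ and let $\mathcal{P}$ be a Class I source set on $\{1,\dots,M\}$, i.e. a nonempty set of probability distributions on $\{1,\dots,M\}$ whose convex hull contains the uniform distribution $(1/M,\dots,1/M)$. Then for every $D\in(0,1]$, \[ \epsilon^*_{\mathrm{DP}}(\mathcal{P},D)=\begin{cases}\log\left((M-1)\frac{1-D}{D}\right), & 0<D<\frac{M-1}{M},\\[2pt] 0, & \frac{M-1}{M}\le D\le 1.\end{cases} \]
   Context: A mechanism is an $M\times M$ row-stochastic matrix $Q$ with entries $Q(j|i)$ = probability of releasing $j$ when the input is $i$, $i,j\in\{1,\dots,M\}$. Its diagonal distortions are $D_i=1-Q(i|i)$. Distortion is Hamming distortion, so the average distortion under a source distribution $P=(P_1,\dots,P_M)$ is $\sum_{i=1}^M P_iD_i$. A mechanism $Q$ is $(\mathcal{P},D)$-valid if $\sum_{i=1}^M P_iD_i\le D$ for every $P\in\mathcal{P}$; $\mathcal{Q}(\mathcal{P},D)$ denotes the set of all such mechanisms. The differential privacy leakage of $Q$ is $\epsilon_{\mathrm{DP}}(Q)=\min\{\epsilon\ge 0: Q(\hat x|x_1)\le e^{\epsilon}Q(\hat x|x_2)\text{ for all }x_1,x_2,\hat x\in\{1,\dots,M\}\}$ (equal to $+\infty$ if no finite $\epsilon$ works; all-zero columns are allowed). For $0<D\le 1$, $\epsilon^*_{\mathrm{DP}}(\mathcal{P},D)=\min_{Q\in\mathcal{Q}(\mathcal{P},D)}\epsilon_{\mathrm{DP}}(Q)$. Logarithms are natural. *)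

(* Defs.v *)
From mathcomp Require Import all_boot all_order all_algebra.
From mathcomp Require Import all_classical all_reals all_analysis.
Set Implicit Arguments. Unset Strict Implicit. Unset Printing Implicit Defensive.
Import Order.TTheory GRing.Theory Num.Theory.
Local Open Scope classical_set_scope.
Local Open Scope ring_scope.

(* Alphabet {1,...,M} is represented by 'I_M = {0,...,M-1}.
   A mechanism Q : 'I_M -> 'I_M -> R, with Q i j = Q(j|i). *)
Definition is_mechanism (R : realType) (M : nat) (Q : 'I_M -> 'I_M -> R) : Prop :=
  (forall i j, 0 <= Q i j) /\ (forall i, \sum_(j < M) Q i j = 1).

(* Diagonal (Hamming) distortion D_i = 1 - Q(i|i). *)
Definition distortion (R : realType) (M : nat) (Q : 'I_M -> 'I_M -> R) (i : 'I_M) : R :=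
  1 - Q i i.

Definition is_prob_dist (R : realType) (M : nat) (P : 'I_M -> R) : Prop :=
  (forall i, 0 <= P i) /\ \sum_(i < M) P i = 1.

Definition valid_mech (R : realType) (M : nat) (Ps : set ('I_M -> R)) (D : R)
  (Q : 'I_M -> 'I_M -> R) : Prop :=
  is_mechanism Q /\
  (forall P, Ps P -> \sum_(i < M) P i * distortion Q i <= D).

Definition classI (R : realType) (M : nat) (Ps : set ('I_M -> R)) : Prop :=
  (exists P, Ps P) /\
  (forall P, Ps P -> is_prob_dist P) /\
  (exists (n : nat) (w : 'I_n -> R) (Pk : 'I_n -> 'I_M -> R),
      (forall k, 0 <= w k) /\ \sum_(k < n) w k = 1 /\
      (forall k, Ps (Pk k)) /\
      (forall i, \sum_(k < n) w k * Pk k i = 1 / M%:R)).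

Definition is_DP (R : realType) (M : nat) (Q : 'I_M -> 'I_M -> R) (e : R) : Prop :=
  forall x1 x2 xh, Q x1 xh <= expR e * Q x2 xh.

(* eps_DP(Q) = min {eps >= 0 : Q is eps-DP}, +oo if the set is empty
   (expressed as an infimum in the extended reals). *)
Definition eps_DP (R : realType) (M : nat) (Q : 'I_M -> 'I_M -> R) : \bar R :=
  ereal_inf [set e%:E | e in [set e : R | 0 <= e /\ is_DP Q e]].

Definition eps_DP_star (R : realType) (M : nat) (Ps : set ('I_M -> R)) (D : R) : \bar R :=
  ereal_inf [set eps_DP Q | Q in [set Q | valid_mech Ps D Q]].

Definition eps_star_formula (R : realType) (M : nat) (D : R) : \bar R :=
  if D < (M%:R - 1) / M%:R then (ln ((M%:R - 1) * ((1 - D) / D)))%:E else 0%E.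

(* Main.v *)
Require Import Defs.
From mathcomp Require Import all_boot all_order all_algebra.
From mathcomp Require Import all_classical all_reals all_analysis.
From mathcomp Require Import ring lra.
Import Order.TTheory GRing.Theory Num.Theory.
Local Open Scope classical_set_scope.
Local Open Scope ring_scope.

Lemma sum_if (R : realType) (M : nat) (i : 'I_M) (a b : R) :
  \sum_(j < M) (if i == j then a else b) = a + (M%:R - 1) * b.
Proof.
rewrite (bigD1 i) //= eqxx.
rewrite (eq_bigr (fun _ => b)); last by move=> j /negbTE; rewrite eq_sym => ->.
rewrite sumr_const cardC1 card_ord.
case: M i => [[]//|n i] /=.
by rewrite -mulr_natl -[n.+1]addn1 natrD; congr (_ + _); ring.
Qed.

Lemma lower_bound (R : realType) (M : nat) (Ps : set ('I_M -> R)) (D : R)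
  (Q : 'I_M -> 'I_M -> R) (e : R) :
  (2 <= M)%N -> classI Ps -> 0 < D -> D <= 1 -> valid_mech Ps D Q ->
  0 <= e -> is_DP Q e -> (eps_star_formula M D <= e%:E)%E.
Proof.
move=> M2 [_ [_ [n [w [Pk [w0 [w1 [PkP Pku]]]]]]]] D0 D1 [[Q0 Q1] QV] e0 DP.
rewrite /eps_star_formula; case: ifP => hD; last by rewrite lee_fin.
rewrite lee_fin.
set x := expR e.
have x0 : 0 < x by apply: expR_gt0.
have MR : (2 : R) <= M%:R by rewrite (ler_nat R 2 M).
set S := \sum_(i < M) Q i i.
have hsum : \sum_(k < n) w k * (\sum_(i < M) Pk k i * distortion Q i) <= D.
  apply: le_trans (_ : \sum_(k < n) w k * D <= D).
    by apply: ler_sum => k _; apply: ler_wpM2l => //; apply: QV.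
  by rewrite -big_distrl /= w1 mul1r.
have eqs : \sum_(k < n) w k * (\sum_(i < M) Pk k i * distortion Q i)
         = (1 / M%:R) * (M%:R - S).
  under eq_bigr do rewrite big_distrr /=.
  rewrite exchange_big /=.
  under eq_bigr => i _.
    under eq_bigr do rewrite mulrA.
    rewrite -big_distrl /= Pku.
  over.
  rewrite -big_distrr /=; congr (_ * _).
  rewrite /distortion sumrB sumr_const card_ord.
  by [].
have hS : M%:R - M%:R * D <= S.
  rewrite eqs in hsum.
  have M0 : 0 < M%:R :> R by lra.
  have : M%:R - S <= M%:R * D.
    rewrite -(ler_pM2l (x := 1 / M%:R)); last by rewrite divr_gt0.
    rewrite mulrA mul1r mulVf ?mul1r; first by rewrite mul1r in hsum.
    by rewrite gt_eqF.
  lra.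
have hj : forall j : 'I_M, x - S >= (x - 1) * Q j j.
  move=> j.
  have -> : x - S = \sum_(i < M) (x * Q j i - Q i i).
    by rewrite sumrB -big_distrr /= Q1 mulr1.
  rewrite (bigD1 j) //= -[leLHS]addr0 mulrBl mul1r; apply: lerD => //.
  apply: sumr_ge0 => i _; rewrite subr_ge0; exact: DP.
have hall : M%:R * (x - S) >= (x - 1) * S.
  have : \sum_(j < M) (x - 1) * Q j j <= \sum_(j < M) (x - S).
    by apply: ler_sum => j _; apply: hj.
  by rewrite -big_distrr /= sumr_const card_ord -[(x - S) *+ M]mulr_natl.
have hS0 : 0 <= S by apply: sumr_ge0 => i _; apply: Q0.
have hxD : (M%:R - 1) * (1 - D) <= x * D.
  have M0 : 0 < M%:R :> R by lra.
  have h1 : M%:R * ((M%:R - 1) * (1 - D)) <= M%:R * (x * D) by nra.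
  by rewrite ler_pM2l in h1.
have D1' : D < 1.
  move: hD; rewrite ltr_pdivlMr; last lra.
  nra.
have ypos : 0 < (M%:R - 1) * ((1 - D) / D).
  by apply: mulr_gt0; [lra| apply: divr_gt0; lra].
rewrite -(expRK e) ler_ln ?posrE //.
rewrite mulrA ler_pdivrMr //.
Qed.

Lemma lb_eps (R : realType) (M : nat) (Ps : set ('I_M -> R)) (D : R)
  (Q : 'I_M -> 'I_M -> R) :
  (2 <= M)%N -> classI Ps -> 0 < D -> D <= 1 -> valid_mech Ps D Q ->
  (eps_star_formula M D <= eps_DP Q)%E.
Proof.
move=> M2 hP D0 D1 hV; apply: le_ereal_inf_tmp => _ [e [e0 he] <-].
exact: (@lower_bound R M Ps D Q e M2 hP D0 D1 hV e0 he).
Qed.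

Lemma exists_opt (R : realType) (M : nat) (Ps : set ('I_M -> R)) (D : R) :
  (2 <= M)%N -> classI Ps -> 0 < D -> D <= 1 ->
  exists Q e, valid_mech Ps D Q /\ 0 <= e /\ is_DP Q e /\
    eps_star_formula M D = e%:E.
Proof.
move=> M2 [_ [hprob _]] D0 D1.
have MR : (2 : R) <= M%:R by rewrite (ler_nat R 2 M).
have M0 : M%:R != 0 :> R by rewrite gt_eqF //; lra.
have M1 : M%:R - 1 != 0 :> R by rewrite gt_eqF //; lra.
rewrite /eps_star_formula; case: ifP => hD.
- set A := 1 - D; set B := D / (M%:R - 1).
  set y := (M%:R - 1) * ((1 - D) / D).
  have hD' : D * M%:R < M%:R - 1 by rewrite -ltr_pdivlMr //; lra.
  have D1' : D < 1 by nra.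
  have B0 : 0 <= B by apply: divr_ge0; lra.
  have yB : y * B = A by rewrite /y /B /A; field; rewrite M1 gt_eqF.
  have BA : B <= A.
    rewrite /B ler_pdivrMr; last lra.
    rewrite /A; nra.
  have ypos : 0 < y.
    by apply: mulr_gt0; [lra| apply: divr_gt0; lra].
  exists (fun i j => if i == j then A else B), (ln y); split; [split; [split|]|split; [|split]].
  + by move=> i j; case: ifP => _ //; lra.
  + move=> i; rewrite sum_if /B /A; by field; exact: M1.
  + move=> P /hprob [_ P1].
    under eq_bigr do rewrite /distortion eqxx /A opprB addrC subrK.
    by rewrite -big_distrl /= P1 mul1r.
  + rewrite -ln1 ler_ln ?posrE //.
    have Bp : 0 < B by apply: divr_gt0; lra.
    rewrite -yB in BA; nra.
  + move=> x1 x2 xh; rewrite lnK ?posrE // .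
    have h1 : (if x1 == xh then A else B) <= A by case: ifP.
    have h2 : B <= (if x2 == xh then A else B) by case: ifP.
    apply: (le_trans h1); apply: le_trans (_ : y * B <= _); [by rewrite yB| apply: ler_wpM2l h2; lra].
  + by [].
- exists (fun _ _ => 1 / M%:R), 0; split; [split; [split|]|split; [|split]].
  + by move=> _ _; apply: divr_ge0 => //; lra.
  + by move=> i; rewrite sumr_const card_ord -mulr_natl; field.
  + move=> P /hprob [_ P1].
    rewrite -big_distrl /= P1 mul1r /distortion.
    have : ~ (D < (M%:R - 1) / M%:R) by rewrite hD.
    have -> : (M%:R - 1) / M%:R = 1 - 1 / M%:R :> R by field.
    lra.
  + by [].
  + by move=> *; rewrite expR0 mul1r div1r.
  + by [].
Qed.

Theorem theorem1 (R : realType) (M : nat) (Ps : set ('I_M -> R)) (D : R) :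
  (2 <= M)%N -> classI Ps -> 0 < D -> D <= 1 ->
  (exists Q, valid_mech Ps D Q /\ eps_DP Q = eps_DP_star Ps D) /\
  eps_DP_star Ps D = eps_star_formula M D.
Proof.
move=> M2 hP D0 D1.
have [Q [e [hV [e0 [hDP hf]]]]] := @exists_opt R M Ps D M2 hP D0 D1.
have eQ : eps_DP Q = e%:E.
  apply/le_anti/andP; split.
    by apply: ereal_inf_lbound; exists e.
  by rewrite -hf; exact: (@lb_eps R M Ps D Q M2 hP D0 D1 hV).
have eS : eps_DP_star Ps D = e%:E.
  apply/le_anti/andP; split.
    by rewrite -eQ; apply: ereal_inf_lbound; exists Q.
  by rewrite -hf; apply: le_ereal_inf_tmp => _ [Q' hQ' <-]; exact: (@lb_eps R M Ps D Q' M2 hP D0 D1 hQ').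
split; last by rewrite eS hf.
by exists Q; split => //; rewrite eQ eS.
Qed.
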